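(* Let $\mathcal V$ be a congruence-modular variety and $A\in\mathcal V$ such that $[\theta,\nabla_A]_A=\theta$ for all $\theta\in\mathrm{Con}(A)$. Then $A/\theta^\perp$ is semiprime for every $\theta\in\mathrm{Con}(A)$ if and only if $A$ is semiprime.
   Context: For an algebra $M$, $\mathrm{Con}(M)$ is its congruence lattice with bottom $\Delta_M$ and top $\nabla_M=M^2$, and $[\cdot,\cdot]_M$ is the term condition commutator: for $\alpha,\beta,\mu\in\mathrm{Con}(M)$, $C(\alpha,\beta;\mu)$ means that for all $n,k$, every $(n+k)$-ary term $t$, all $(a_i,b_i)\in\alpha$ and $(c_j,d_j)\in\beta$: $(t(\bar a,\bar c),t(\bar a,\bar d))\in\mu$ iff $(t(\bar b,\bar c),t(\bar b,\bar d))\in\mu$; $[\alpha,\beta]_M=\bigcap\{\mu: C(\alpha,\beta;\mu)\}$. A congruence $\phi\neq\nabla_M$ is prime if $[\alpha,\beta]_M\subseteq\phi$ implies $\alpha\subseteq\phi$ or $\beta\subseteq\phi$; $\rho_M(\theta)$ is the intersection of all prime congruences containing $\theta$ (equal to $\nabla_M$ if there are none); $M$ is semiprime if $\rho_M(\Delta_M)=\Delta_M$. For $\beta\in\mathrm{Con}(A)$, $\beta^\perp=\bigvee\{\alpha\in\mathrm{Con}(A):[\alpha,\beta]_A=\Delta_A\}$. *)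

(* Defs.v *)
From mathcomp Require Import ssreflect ssrfun ssrbool eqtype ssrnat fintype.
Set Warnings "-notation-overridden".
From Stdlib Require Import ClassicalEpsilon.

Set Implicit Arguments.
Unset Strict Implicit.
Unset Printing Implicit Defensive.

Record signature := Signature { op_sym : Type; arity : op_sym -> nat }.

Record algebra (s : signature) := Algebra {
  carrier :> Type;
  interp : forall o : op_sym s, ('I_(arity o) -> carrier) -> carrier }.

Inductive term (s : signature) (X : Type) : Type :=
  | Var : X -> term s X
  | App : forall o : op_sym s, ('I_(arity o) -> term s X) -> term s X.

Fixpoint eval (s : signature) (A : algebra s) (X : Type) (env : X -> A)
  (t : term s X) : A :=
  match t with
  | Var x => env x
  | App o ts => @interp s A o (fun i => eval env (ts i))
  end.

Definition rel_of (T : Type) := T -> T -> Prop.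
Definition rsub (T : Type) (R S : rel_of T) := forall x y, R x y -> S x y.
Definition releq (T : Type) (R S : rel_of T) := rsub R S /\ rsub S R.
Definition rmeet (T : Type) (R S : rel_of T) : rel_of T := fun x y => R x y /\ S x y.

Definition is_con (s : signature) (A : algebra s) (th : rel_of A) : Prop :=
  (forall x, th x x) /\ (forall x y, th x y -> th y x) /\
  (forall x y z, th x y -> th y z -> th x z) /\
  (forall (o : op_sym s) (a b : 'I_(arity o) -> A),
      (forall i, th (a i) (b i)) -> th (@interp s A o a) (@interp s A o b)).

Definition Delta (s : signature) (A : algebra s) : rel_of A := fun x y => x = y.
Definition Nabla (s : signature) (A : algebra s) : rel_of A := fun _ _ => True.
Arguments Delta {s} A _ _.
Arguments Nabla {s} A _ _.

Definition cg (s : signature) (A : algebra s) (R : rel_of A) : rel_of A :=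
  fun x y => forall th, is_con th -> rsub R th -> th x y.

Definition cjoin (s : signature) (A : algebra s) (al be : rel_of A) : rel_of A :=
  cg (fun x y => al x y \/ be x y).
Definition cbigjoin (s : signature) (A : algebra s) (F : rel_of A -> Prop) : rel_of A :=
  cg (fun x y => exists al, F al /\ al x y).

Definition sumenv (T : Type) (n k : nat) (a : 'I_n -> T) (c : 'I_k -> T)
  (v : 'I_n + 'I_k) : T :=
  match v with inl i => a i | inr j => c j end.

Definition TC (s : signature) (A : algebra s) (al be mu : rel_of A) : Prop :=
  forall (n k : nat) (t : term s ('I_n + 'I_k)) (a b : 'I_n -> A) (c d : 'I_k -> A),
    (forall i, al (a i) (b i)) -> (forall j, be (c j) (d j)) ->
    (mu (eval (sumenv a c) t) (eval (sumenv a d) t) <->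
     mu (eval (sumenv b c) t) (eval (sumenv b d) t)).

Definition comm (s : signature) (A : algebra s) (al be : rel_of A) : rel_of A :=
  fun x y => forall mu, is_con mu -> TC al be mu -> mu x y.

Definition prime_con (s : signature) (A : algebra s) (phi : rel_of A) : Prop :=
  is_con phi /\ ~ releq phi (Nabla A) /\
  forall al be, is_con al -> is_con be ->
    rsub (comm al be) phi -> rsub al phi \/ rsub be phi.

Definition rho (s : signature) (A : algebra s) (th : rel_of A) : rel_of A :=
  fun x y => forall phi, prime_con phi -> rsub th phi -> phi x y.

Definition semiprime (s : signature) (A : algebra s) : Prop :=
  releq (rho (Delta A)) (Delta A).

Definition perp (s : signature) (A : algebra s) (be : rel_of A) : rel_of A :=
  cbigjoin (fun al => is_con al /\ releq (comm al be) (Delta A)).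

(* Quotient algebra A / th (meaningful when th is a congruence):
   elements are the classes th a, operations act on chosen representatives. *)
Definition qcarrier (s : signature) (A : algebra s) (th : rel_of A) : Type :=
  { P : A -> Prop | exists a, P = th a }.

Definition qclass (s : signature) (A : algebra s) (th : rel_of A) (a : A)
  : qcarrier th := exist _ (th a) (ex_intro _ a erefl).

Definition qrep (s : signature) (A : algebra s) (th : rel_of A)
  (q : qcarrier th) : A :=
  proj1_sig (constructive_indefinite_description _ (proj2_sig q)).

Definition quotient (s : signature) (A : algebra s) (th : rel_of A) : algebra s :=
  @Algebra s (qcarrier th)
    (fun o args => qclass th (@interp s A o (fun i => qrep (args i)))).

(* Varieties as equational classes (Birkhoff): given by a set of identities. *)
Definition models (s : signature) (A : algebra s)
  (Sigma : term s nat -> term s nat -> Prop) : Prop :=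
  forall l r, Sigma l r -> forall env : nat -> A, eval env l = eval env r.

Definition con_modular (s : signature) (A : algebra s) : Prop :=
  forall al be ga : rel_of A, is_con al -> is_con be -> is_con ga ->
    rsub al ga ->
    releq (cjoin al (rmeet be ga)) (rmeet (cjoin al be) ga).

Definition congruence_modular_variety (s : signature)
  (Sigma : term s nat -> term s nat -> Prop) : Prop :=
  forall B : algebra s, models B Sigma -> con_modular B.

(* Main.v *)
Require Import Defs.
From mathcomp Require Import ssreflect ssrfun ssrbool eqtype ssrnat fintype.
From Stdlib Require Import ClassicalEpsilon Classical ProofIrrelevance FunctionalExtensionality PropExtensionality.

Set Implicit Arguments.
Unset Strict Implicit.

Lemma eval_con s (A : algebra s) (th : rel_of A) X (t : term s X) (e1 e2 : X -> A) :
  is_con th -> (forall v, th (e1 v) (e2 v)) -> th (eval e1 t) (eval e2 t).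
Proof.
case=> _ [_ [_ Hc]] He; elim: t => [x|o ts IH] /=; [exact: He| exact: Hc].
Qed.

Lemma cg_con s (A : algebra s) (R : rel_of A) : is_con (cg R).
Proof.
split; [|split; [|split]].
- move=> x th [Hr _] _; exact: Hr.
- move=> x y H th Hth HR; case: (Hth) => _ [Hs _]; exact: Hs _ _ (H th Hth HR).
- move=> x y z H1 H2 th Hth HR; case: (Hth) => _ [_ [Ht _]].
  exact: Ht _ _ _ (H1 th Hth HR) (H2 th Hth HR).
- move=> o a b H th Hth HR; case: (Hth) => _ [_ [_ Hc]]; apply: Hc => i; exact: H.
Qed.

Lemma cg_sub s (A : algebra s) (R : rel_of A) : rsub R (cg R).
Proof. move=> x y H th _ HR; exact: HR. Qed.

Lemma cg_min s (A : algebra s) (R th : rel_of A) : is_con th -> rsub R th -> rsub (cg R) th.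
Proof. move=> Hth HR x y H; exact: H. Qed.

Lemma TC_right s (A : algebra s) (al be : rel_of A) : is_con be -> TC al be be.
Proof.
move=> Hbe n k t a b c d Hab Hcd.
have H: forall a0 : 'I_n -> A, be (eval (sumenv a0 c) t) (eval (sumenv a0 d) t).
  move=> a0; apply: eval_con => //; case=> /= [i|j]; [exact: (proj1 Hbe)| exact: Hcd].
split=> _; exact: H.
Qed.

Lemma TC_left s (A : algebra s) (al be : rel_of A) : is_con al -> TC al be al.
Proof.
move=> Hal n k t a b c d Hab Hcd.
have H: forall c0 : 'I_k -> A, al (eval (sumenv a c0) t) (eval (sumenv b c0) t).
  move=> c0; apply: eval_con => //; case=> /= [i|j]; [exact: Hab| exact: (proj1 Hal)].
case: (Hal) => _ [Hs [Ht _]].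
split=> H1.
- eapply (Ht _ _ _ (Hs _ _ (H c))); eapply (Ht _ _ _ H1); exact: H.
- eapply (Ht _ _ _ (H c)); eapply (Ht _ _ _ H1); exact: Hs _ _ (H d).
Qed.

Lemma comm_l s (A : algebra s) (al be : rel_of A) : is_con al -> rsub (comm al be) al.
Proof. move=> Hal x y H; apply: H => //; exact: TC_left. Qed.

Lemma comm_r s (A : algebra s) (al be : rel_of A) : is_con be -> rsub (comm al be) be.
Proof. move=> Hbe x y H; apply: H => //; exact: TC_right. Qed.

Lemma comm_refl s (A : algebra s) (al be : rel_of A) x : comm al be x x.
Proof. move=> mu [Hr _] _; exact: Hr. Qed.

Lemma Delta_con s (A : algebra s) : is_con (Delta A).
Proof.
unfold is_con, Delta; split; [|split; [|split]].
- by [].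
- by intros x y E; subst.
- by intros x y z E1 E2; subst.
- intros o a b H; have E : a = b by apply: functional_extensionality.
  by subst.
Qed.

Lemma Nabla_con s (A : algebra s) : is_con (Nabla A).
Proof. by rewrite /Nabla; split; [|split; [|split]]. Qed.

Lemma qclass_eq s (A : algebra s) (th : rel_of A) :
  is_con th -> forall x y, qclass th x = qclass th y <-> th x y.
Proof.
case=> Hr [Hs [Ht _]] x y; split.
- move=> /(f_equal (@proj1_sig _ _)) /= E. rewrite E. exact: Hr.
- move=> H. have E: th x = th y.
    apply: functional_extensionality => z; apply: propositional_extensionality.
    split => H1; [exact: Ht (Hs _ _ H) H1 | exact: Ht H H1].
  rewrite /qclass. by apply: subset_eq_compat.
Qed.

Lemma qclass_rep s (A : algebra s) (th : rel_of A) (p : qcarrier th) :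
  qclass th (qrep p) = p.
Proof.
rewrite /qrep; case: p => P HP /=.
case: (constructive_indefinite_description _ HP) => a Ha /=.
subst P; rewrite /qclass; by apply: subset_eq_compat.
Qed.

Lemma rep_rel s (A : algebra s) (th : rel_of A) x :
  is_con th -> th (qrep (qclass th x)) x.
Proof. move=> Hth; apply: (proj1 (qclass_eq Hth _ _)); exact: qclass_rep. Qed.

Lemma eval_quot s (A : algebra s) (th : rel_of A) X (t : term s X) (env : X -> A)
  (env' : X -> quotient th) :
  is_con th -> (forall v, env' v = qclass th (env v)) ->
  eval env' t = qclass th (eval env t).
Proof.
move=> Hth He; elim: t => [x|o ts IH] /=; first exact: He.
apply: (proj2 (qclass_eq Hth _ _)). case: (Hth) => _ [_ [_ Hc]]. apply: Hc => i.
rewrite IH. exact: rep_rel.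
Qed.

Definition lift s (A : algebra s) (th : rel_of A) (ps : rel_of A) : rel_of (quotient th) :=
  fun p q => ps (qrep p) (qrep q).
Definition pull s (A : algebra s) (th : rel_of A) (ps : rel_of (quotient th)) : rel_of A :=
  fun a b => ps (qclass th a) (qclass th b).
Arguments lift {s A} th ps _ _.
Arguments pull {s A th} ps _ _.

Lemma lift_class s (A : algebra s) (th ps : rel_of A) x y :
  is_con th -> is_con ps -> rsub th ps ->
  (lift th ps (qclass th x) (qclass th y) <-> ps x y).
Proof.
move=> Hth [_ [Hs [Ht _]]] Hsub; rewrite /lift.
have Rx := Hsub _ _ (rep_rel x Hth); have Ry := Hsub _ _ (rep_rel y Hth).
split=> H.
- eapply (Ht _ _ _ (Hs _ _ Rx)); eapply (Ht _ _ _ H); exact: Ry.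
- eapply (Ht _ _ _ Rx); eapply (Ht _ _ _ H); exact: Hs _ _ Ry.
Qed.

Lemma lift_con s (A : algebra s) (th ps : rel_of A) :
  is_con th -> is_con ps -> rsub th ps -> is_con (lift th ps).
Proof.
move=> Hth Hps Hsub; case: (Hps) => Hr [Hs [Ht Hc]].
split; [|split; [|split]]; rewrite /lift.
- move=> x; exact: Hr.
- move=> x y; exact: Hs.
- move=> x y z; exact: Ht.
- move=> o a b H /=. apply: (proj2 (lift_class _ _ Hth Hps Hsub)). exact: Hc.
Qed.

Lemma interp_qclass s (A : algebra s) (th : rel_of A) o (a : 'I_(arity o) -> A) :
  is_con th -> qclass th (interp a) = @interp s (quotient th) o (fun i => qclass th (a i)).
Proof.
move=> Hth /=; apply: (proj2 (qclass_eq Hth _ _)). case: (Hth) => _ [Hs [_ Hc]].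
apply: Hc => i; apply: Hs; exact: rep_rel.
Qed.

Lemma pull_con s (A : algebra s) (th : rel_of A) (ps : rel_of (quotient th)) :
  is_con th -> is_con ps -> is_con (pull ps).
Proof.
move=> Hth Hps; case: (Hps) => Hr [Hs [Ht Hc]].
split; [|split; [|split]]; rewrite /pull.
- move=> x; exact: Hr.
- move=> x y; exact: Hs.
- move=> x y z; exact: Ht.
- move=> o a b H. rewrite !interp_qclass //. exact: Hc.
Qed.

Lemma TC_pull s (A : algebra s) (th : rel_of A) (al be mu : rel_of (quotient th)) :
  is_con th -> TC al be mu -> TC (pull al) (pull be) (pull mu).
Proof.
move=> Hth HTC n k t a b c d Hab Hcd; rewrite /pull.
have E: forall (a0 : 'I_n -> A) (c0 : 'I_k -> A),
    qclass th (eval (sumenv a0 c0) t) =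
    @eval s (quotient th) _ (sumenv (fun i => qclass th (a0 i)) (fun j => qclass th (c0 j))) t.
  move=> a0 c0; symmetry; apply: eval_quot => //; by case.
rewrite !E; exact: HTC.
Qed.

Lemma TC_lift s (A : algebra s) (th al be mu : rel_of A) :
  is_con th -> is_con mu -> rsub th mu -> TC al be mu ->
  TC (lift th al) (lift th be) (lift th mu).
Proof.
move=> Hth Hmu Hsub HTC n k t a b c d Hab Hcd.
have E: forall (a0 : 'I_n -> quotient th) (c0 : 'I_k -> quotient th),
    eval (sumenv a0 c0) t =
    qclass th (eval (sumenv (fun i => qrep (a0 i)) (fun j => qrep (c0 j))) t).
  move=> a0 c0; apply: eval_quot => //; case=> [i|j] /=; by rewrite qclass_rep.
rewrite !E !(lift_class _ _ Hth Hmu Hsub); exact: HTC.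
Qed.

Lemma prime_lift s (A : algebra s) (th ps : rel_of A) :
  is_con th -> prime_con ps -> rsub th ps -> prime_con (lift th ps).
Proof.
move=> Hth [Hps [HN Hpr]] Hsub.
split; first exact: lift_con.
split.
- move=> [_ E]; apply: HN; split => // x y _.
  apply: (proj1 (lift_class _ _ Hth Hps Hsub)); exact: E.
- move=> al be Hal Hbe H.
  have Hal' := pull_con Hth Hal; have Hbe' := pull_con Hth Hbe.
  have: rsub (comm (pull al) (pull be)) ps.
    move=> x y Hxy; apply: (proj1 (lift_class _ _ Hth Hps Hsub)); apply: H.
    move=> mu Hmu TCmu; exact: Hxy (pull mu) (pull_con Hth Hmu) (TC_pull Hth TCmu).
  case/(Hpr _ _ Hal' Hbe') => Hs; [left|right] => p q Hpq; rewrite /lift; apply: Hs;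
    by rewrite /pull !qclass_rep.
Qed.

Lemma prime_pull s (A : algebra s) (th : rel_of A) (ps : rel_of (quotient th)) :
  is_con th -> rsub th (Delta A) -> prime_con ps -> prime_con (pull ps).
Proof.
move=> Hth HD [Hps [HN Hpr]].
have HsubD : forall al, is_con al -> rsub th al.
  move=> al [Hr _] x y /HD ->; exact: Hr.
split; first exact: pull_con.
split.
- move=> [_ E]; apply: HN; split => // p q _.
  rewrite -(qclass_rep p) -(qclass_rep q); exact: E.
- move=> al be Hal Hbe H.
  have Hal' := lift_con Hth Hal (HsubD _ Hal).
  have Hbe' := lift_con Hth Hbe (HsubD _ Hbe).
  have: rsub (comm (lift th al) (lift th be)) ps.
    move=> p q Hpq. rewrite -(qclass_rep p) -(qclass_rep q); apply: H.
    move=> mu Hmu TCmu.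
    exact: Hpq (lift th mu) (lift_con Hth Hmu (HsubD _ Hmu))
             (TC_lift Hth Hmu (HsubD _ Hmu) TCmu).
  case/(Hpr _ _ Hal' Hbe') => Hs; [left|right] => x y Hxy; rewrite /pull; apply: Hs.
  + by apply: (proj2 (lift_class _ _ Hth Hal (HsubD _ Hal))).
  + by apply: (proj2 (lift_class _ _ Hth Hbe (HsubD _ Hbe))).
Qed.

Lemma perp_prime s (A : algebra s) (th phi : rel_of A) :
  is_con th -> prime_con phi -> ~ rsub th phi -> rsub (perp th) phi.
Proof.
move=> Hth [Hphi [_ Hpr]] Hn; apply: cg_min => // x y [al [[Hal [HD _]] Hxy]].
case: (Hpr al th Hal Hth).
- move=> u v /HD ->; exact: (proj1 Hphi).
- move=> Hs; exact: Hs.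
- by [].
Qed.

Lemma perp_radical s (A : algebra s) (th : rel_of A) :
  is_con th -> semiprime A -> rsub (rho (perp th)) (perp th).
Proof.
move=> Hth [Hsp _].
pose ps : rel_of A := fun x y => forall phi, prime_con phi -> ~ rsub th phi -> phi x y.
have Hps : is_con ps.
  split; [|split; [|split]].
  - move=> x phi [[Hr _] _] _; exact: Hr.
  - move=> x y H phi Hp Hn; case: (Hp) => [[_ [Hs _]] _]; exact: Hs _ _ (H _ Hp Hn).
  - move=> x y z H1 H2 phi Hp Hn; case: (Hp) => [[_ [_ [Ht _]]] _].
    exact: Ht _ _ _ (H1 _ Hp Hn) (H2 _ Hp Hn).
  - move=> o a b H phi Hp Hn; case: (Hp) => [[_ [_ [_ Hc]]] _].
    apply: Hc => i; exact: H.
move=> x y Hr.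
have Hxy : ps x y.
  move=> phi Hp Hn; apply: Hr => //; exact: perp_prime.
apply: cg_sub; exists ps; split => //; split => //; split.
- move=> u v Huv; apply: Hsp => phi Hp _.
  case: (classic (rsub th phi)) => Hs.
  + apply: Hs; exact: (comm_r Hth Huv).
  + exact: (comm_l Hps Huv) phi Hp Hs.
- move=> u v ->; exact: comm_refl.
Qed.

Theorem mainTheorem4 (s : signature) (Sigma : term s nat -> term s nat -> Prop)
  (HV : congruence_modular_variety Sigma)
  (A : algebra s) (HA : models A Sigma)
  (Hcomm : forall th : rel_of A, is_con th -> releq (comm th (Nabla A)) th) :
  (forall th : rel_of A, is_con th -> semiprime (quotient (perp th))) <->
  semiprime A.
Proof.
split.
- move=> H.
  have HQ := H _ (Nabla_con A).
  set th := perp (Nabla A) in HQ.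
  have Hth : is_con th by exact: cg_con.
  have HD : rsub th (Delta A).
    apply: cg_min; first exact: Delta_con.
    move=> x y [al [[Hal [HD _]] Hxy]]; apply: HD; exact: (proj2 (Hcomm al Hal)).
  split.
  + move=> x y Hr; apply: (HD x y); apply: (proj1 (qclass_eq Hth _ _)); apply: (proj1 HQ).
    move=> ps Hps _; apply: (Hr (pull ps)); first exact: (prime_pull Hth HD Hps).
    move=> u v ->; exact: (proj1 (pull_con Hth (proj1 Hps))).
  + move=> x y -> phi [[Hr _] _] _; exact: Hr.
- move=> Hsp th Hth.
  have Hphi : is_con (perp th) by exact: cg_con.
  split.
  + move=> p q H; rewrite -(qclass_rep p) -(qclass_rep q).
    apply: (proj2 (qclass_eq Hphi _ _)); apply: perp_radical => // ps Hps Hsub.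
    have := H (lift (perp th) ps) (prime_lift Hphi Hps Hsub).
    apply; move=> u v ->; exact: (proj1 (proj1 Hps)).
  + move=> p q -> phi [[Hr _] _] _; exact: Hr.
Qed.
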